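(* Let $G$ be a graph whose vertex set is partitioned into three cliques $A_1,A_2,A_3$ (equivalently, $G$ is the complement of a 3-partite graph with color classes $A_1,A_2,A_3$). If the vertex set of $G$ can be partitioned into triangles, then there is a partition of the vertex set of $G$ into triangles such that, for each $i\in\{1,2,3\}$, at most $14$ vertices of $A_i$ lie in triangles of the partition that are not entirely contained in $A_i$. *)

(* Defs.v *)
From mathcomp Require Import all_boot.
Set Implicit Arguments. Unset Strict Implicit. Unset Printing Implicit Defensive.

Definition simple_graph (T : finType) (e : rel T) : Prop :=
  symmetric e /\ irreflexive e.

Definition is_clique (T : finType) (e : rel T) (S : {set T}) : Prop :=
  forall x y, x \in S -> y \in S -> x != y -> e x y.

Definition is_triangle (T : finType) (e : rel T) (B : {set T}) : Prop :=
  #|B| = 3 /\ is_clique e B.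

Definition triangle_partition (T : finType) (e : rel T) (P : {set {set T}}) : Prop :=
  partition P [set: T] /\ forall B, B \in P -> is_triangle e B.

(* Main.v *)
Require Import Defs.
From mathcomp Require Import all_boot.
Set Implicit Arguments. Unset Strict Implicit. Unset Printing Implicit Defensive.

Definition o0 : 'I_3 := @Ordinal 3 0 isT.
Definition o1 : 'I_3 := @Ordinal 3 1 isT.
Definition o2 : 'I_3 := @Ordinal 3 2 isT.

Lemma ord3_cases (j : 'I_3) : j = o0 \/ j = o1 \/ j = o2.
Proof.
case: j => [[|[|[|m]]] Hj]; [left|right;left|right;right|by []];
  by apply: val_inj.
Qed.

Definition pc (p : 'I_4 * 'I_4 * 'I_4) (i : 'I_3) : nat :=
  match val i with 0 => p.1.1 | 1 => p.1.2 | _ => p.2 end.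
Definition Rp (p : 'I_4 * 'I_4 * 'I_4) : bool :=
  [&& (p.1.1 : nat) + p.1.2 + p.2 == 3, p.1.1 < 3, p.1.2 < 3 & p.2 < 3].

Lemma comp14 (i : 'I_3) :
  \sum_(p : 'I_4 * 'I_4 * 'I_4) (if Rp p then 2 * pc p i else 0) <= 14.
Proof.
pose G (a b c : 'I_4) := if Rp (a, b, c) then 2 * pc (a,b,c) i else 0.
rewrite (eq_bigr (fun p => G p.1.1 p.1.2 p.2)); last by case=> [[]].
rewrite -(pair_bigA _ (fun ab c => G ab.1 ab.2 c)) -(pair_bigA _ (fun a b => \sum_c G a b c)).
rewrite /G; clear G; case: i => [[|[|[|//]]] Hi];
  rewrite !big_ord_recr !big_ord0; vm_compute; reflexivity.
Qed.

Lemma three (U : finType) (S : {set U}) : 2 < #|S| ->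
  exists x y z, [/\ x \in S, y \in S, z \in S & [/\ x != y, x != z & y != z]].
Proof.
move=> H.
have /set0Pn [x Hx] : S != set0 by rewrite -card_gt0 (leq_trans _ H).
move: H; rewrite (cardsD1 x S) Hx add1n ltnS => H.
have /set0Pn [y Hy] : S :\ x != set0 by rewrite -card_gt0 (leq_trans _ H).
move: H; rewrite (cardsD1 y) Hy add1n ltnS => H.
have /set0Pn [z Hz] : S :\ x :\ y != set0 by rewrite -card_gt0.
move: Hy Hz; rewrite !inE => /andP[Hyx Hy] /and3P[Hzy Hzx Hz].
exists x, y, z; split => //; split => //; by rewrite eq_sym.
Qed.

Lemma cardsU_disj (U : finType) (X Y : {set U}) :
  (forall x, x \in X -> x \in Y -> False) -> #|X :|: Y| = #|X| + #|Y|.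
Proof.
move=> H; rewrite cardsU.
have -> : X :&: Y = set0.
  apply/setP => x; rewrite !inE; apply/negbTE/negP => /andP[a b]; exact: H a b.
by rewrite cards0 subn0.
Qed.

Lemma card3set (U : finType) (x y z : U) : x != y -> x != z -> y != z ->
  #|[set x; y; z]| = 3.
Proof.
move=> Hxy Hxz Hyz.
rewrite cardsU_disj ?cards2 ?Hxy ?cards1 // => w; rewrite !inE => /orP[] /eqP -> /eqP E;
  [move: Hxz | move: Hyz]; by rewrite E eqxx.
Qed.

Lemma card_bigcup_le (I U : finType) (r : seq I) (Pr : pred I) (F : I -> {set U}) :
  #|\bigcup_(i <- r | Pr i) F i| <= \sum_(i <- r | Pr i) #|F i|.
Proof.
elim: r => [|a r IH]; first by rewrite !big_nil cards0.
rewrite !big_cons; case: (Pr a) => //.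
by rewrite cardsU (leq_trans (leq_subr _ _)) // leq_add2l.
Qed.

Definition TP (T : finType) (e : rel T) (P : {set {set T}}) : Prop :=
  [/\ forall B, B \in P -> is_triangle e B,
      (forall x, exists2 B, B \in P & x \in B) &
      (forall B C x, B \in P -> C \in P -> x \in B -> x \in C -> B = C)].

Lemma TPE (T : finType) (e : rel T) (P : {set {set T}}) :
  triangle_partition e P <-> TP e P.
Proof.
split.
- move=> [/and3P [/eqP Hcov Htriv H0] Ht]; split => //.
  + move=> x; have : x \in cover P by rewrite Hcov inE.
    by move/bigcupP.
  + move=> B C x HB HC HxB HxC; case: (eqVneq B C) => // neq.
    have := trivIsetP Htriv B C HB HC neq.
    move/disjoint_setI0/setP/(_ x); by rewrite !inE HxB HxC.
- move=> [Ht Hc Hu]; split => //; apply/and3P; split.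
  + apply/eqP/setP => x; rewrite inE; apply/bigcupP; exact: Hc.
  + apply/trivIsetP => B C HB HC neq; rewrite -setI_eq0; apply/eqP/setP => x.
    rewrite !inE; apply/negbTE/negP => /andP[a b].
    by move: neq; rewrite (Hu B C x HB HC a b) eqxx.
  + apply/negP => H; have [h _] := Ht _ H; by rewrite cards0 in h.
Qed.

Definition mixed (T : finType) (A : 'I_3 -> {set T}) (B : {set T}) : bool :=
  [forall j, #|B :&: A j| < 3].

Definition prof (T : finType) (A : 'I_3 -> {set T}) (B : {set T}) : 'I_4 * 'I_4 * 'I_4 :=
  (inord #|B :&: A o0|, inord #|B :&: A o1|, inord #|B :&: A o2|).

Lemma pc_prof (T : finType) (A : 'I_3 -> {set T}) (B : {set T}) (j : 'I_3) :
  #|B| <= 3 -> pc (prof A B) j = #|B :&: A j|.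
Proof.
move=> HB.
have H4 : forall k, #|B :&: A k| < 4.
  move=> k; rewrite ltnS (leq_trans _ HB) //; apply: subset_leq_card; exact: subsetIl.
case: (ord3_cases j) => [->|[->|->]]; rewrite /pc /prof /= inordK //.
Qed.

Lemma notin_other (T : finType) (A : 'I_3 -> {set T}) :
  (forall i j : 'I_3, i != j -> [disjoint A i & A j]) ->
  forall x i j, x \in A i -> j != i -> (x \in A j) = false.
Proof. move=> Hdis x i j Hx Hji; exact: (disjointFl (Hdis j i Hji) Hx). Qed.

Lemma card_split (T : finType) (A : 'I_3 -> {set T}) :
  (forall i j : 'I_3, i != j -> [disjoint A i & A j]) ->
  (forall x : T, exists i : 'I_3, x \in A i) ->
  forall B : {set T}, #|B| = #|B :&: A o0| + #|B :&: A o1| + #|B :&: A o2|.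
Proof.
move=> Hdis Hcov B.
rewrite -(cardsID (A o0) B) -addnA; congr (_ + _).
rewrite -(cardsID (A o1) (B :\: A o0)); congr (_ + _).
- apply: eq_card => x; rewrite !inE.
  case Hx: (x \in A o1); rewrite ?andbF ?andbT //.
  by rewrite (notin_other Hdis Hx).
- apply: eq_card => x; rewrite !inE.
  case: (Hcov x) => k; case: (ord3_cases k) => [->|[->|->]] Hx.
  + by rewrite Hx (@notin_other _ _ Hdis x _ o2 Hx) //= !andbF.
  + by rewrite Hx (@notin_other _ _ Hdis x _ o2 Hx) //= !andbF.
  + by rewrite Hx (@notin_other _ _ Hdis x _ o0 Hx) // (@notin_other _ _ Hdis x _ o1 Hx) //= andbT.
Qed.

Lemma R_prof (T : finType) (A : 'I_3 -> {set T}) :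
  (forall i j : 'I_3, i != j -> [disjoint A i & A j]) ->
  (forall x : T, exists i : 'I_3, x \in A i) ->
  forall B : {set T}, #|B| = 3 -> mixed A B -> Rp (prof A B).
Proof.
move=> Hdis Hcov B HB /forallP Hm.
have H0 := pc_prof A o0 (eq_leq HB); have H1 := pc_prof A o1 (eq_leq HB);
have H2 := pc_prof A o2 (eq_leq HB).
rewrite /pc /= in H0 H1 H2.
by rewrite /Rp H0 H1 H2 -(card_split Hdis Hcov) HB eqxx !Hm.
Qed.

Definition tiling (T : finType) (e : rel T) (A : 'I_3 -> {set T}) (S : {set T})
  (Q : {set {set T}}) : Prop :=
  [/\ forall X, X \in Q -> [/\ is_triangle e X, X \subset S & ~~ mixed A X],
      (forall x, x \in S -> exists2 X, X \in Q & x \in X) &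
      (forall X Y x, X \in Q -> Y \in Q -> x \in X -> x \in Y -> X = Y)].

Lemma tile (T : finType) (e : rel T) (A : 'I_3 -> {set T}) :
  (forall i j : 'I_3, i != j -> [disjoint A i & A j]) ->
  (forall x : T, exists i : 'I_3, x \in A i) ->
  (forall i : 'I_3, is_clique e (A i)) ->
  forall n (S : {set T}), #|S| <= n -> (forall j, 3 %| #|S :&: A j|) ->
  exists Q, tiling e A S Q.
Proof.
move=> Hdis Hcov Hcl.
have Hempty : forall S : {set T}, S = set0 -> exists Q, tiling e A S Q.
  move=> S ->; exists set0; split => [X|y|X Y y]; by rewrite inE.
elim=> [|n IH] S HS Hd.
  by apply: Hempty; apply: cards0_eq; move: HS; rewrite leqn0 => /eqP.
case: (eqVneq S set0) => [HS0|/set0Pn [x Hx]]; first exact: Hempty.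
case: (Hcov x) => j Hxj.
have Hpos : 0 < #|S :&: A j| by rewrite card_gt0; apply/set0Pn; exists x; rewrite inE Hx.
have [a [b [c [Ha Hb Hc [Hab Hac Hbc]]]]] := three (leq_trans (isT : 2 < 3) (dvdn_leq Hpos (Hd j))).
set X := [set a; b; c].
have HXS : X \subset S :&: A j.
  by apply/subsetP => y /setUP [/setUP [] /set1P -> | /set1P ->].
have HX3 : #|X| = 3 by apply: card3set.
have HXA : X \subset A j by apply: (subset_trans HXS); exact: subsetIr.
have HXS' : X \subset S by apply: (subset_trans HXS); exact: subsetIl.
have [Q' [HQ1 HQ2 HQ3]] : exists Q', tiling e A (S :\: X) Q'.
  apply: IH.
    rewrite -ltnS (leq_trans _ HS) // -(cardsID X S) -[X in X < _]add0n ltn_add2r.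
    rewrite card_gt0; apply/set0Pn; exists a; rewrite !inE eqxx /=.
    by move: Ha; rewrite inE andbT => /andP[].
  move=> k; have := Hd k; rewrite -(cardsID X (S :&: A k)).
  have -> : (S :&: A k) :\: X = (S :\: X) :&: A k.
    by apply/setP => y; rewrite !in_setI !in_setD !in_setI; case: (y \in X); case: (y \in S); case: (y \in A k).
  have H3 : 3 %| #|S :&: A k :&: X|.
    case: (eqVneq k j) => [->|Hkj].
      by rewrite (setIidPr HXS) HX3.
    have -> : S :&: A k :&: X = set0.
      apply/setP => y; rewrite !in_setI in_set0; apply/negbTE/negP => /andP[/andP[_ H1] H2].
      have := subsetP HXA y H2.
      by rewrite (@notin_other _ _ Hdis y _ j H1) // eq_sym.
    by rewrite cards0.
  by rewrite dvdn_addr.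
exists (X |: Q'); split.
- move=> Y /setU1P [->|HY].
  + split => //.
    * split => // y z Hy Hz; apply: (Hcl j); exact: (subsetP HXA).
    * rewrite /mixed negb_forall; apply/existsP; exists j.
      by rewrite -leqNgt (setIidPl HXA) HX3.
  + have [h1 h2 h3] := HQ1 Y HY; split => //.
    by apply: (subset_trans h2); exact: subsetDl.
- move=> y Hy; case Hyx: (y \in X).
    by exists X; rewrite ?setU11.
  have [Y HY HyY] : exists2 Y, Y \in Q' & y \in Y by apply: HQ2; rewrite inE Hyx Hy.
  by exists Y; rewrite // setU1r.
- have outX : forall Y y, Y \in Q' -> y \in Y -> y \in X -> False.
    move=> Y y HY HyY HyX; have [_ h2 _] := HQ1 Y HY.
    by have := subsetP h2 y HyY; rewrite inE HyX.
  move=> Y Z y /setU1P [->|HY] /setU1P [->|HZ] HyY HyZ //.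
  + by case: (outX Z y HZ HyZ HyY).
  + by case: (outX Y y HY HyY HyZ).
  + exact: HQ3 HY HZ HyY HyZ.
Qed.

Lemma exch (T : finType) (e : rel T) (A : 'I_3 -> {set T}) :
  (forall i j : 'I_3, i != j -> [disjoint A i & A j]) ->
  (forall x : T, exists i : 'I_3, x \in A i) ->
  (forall i : 'I_3, is_clique e (A i)) ->
  forall P B1 B2 B3, TP e P -> B1 \in P -> B2 \in P -> B3 \in P ->
  B1 != B2 -> B1 != B3 -> B2 != B3 ->
  (forall j, #|B2 :&: A j| = #|B1 :&: A j| /\ #|B3 :&: A j| = #|B1 :&: A j|) ->
  mixed A B1 ->
  exists P', TP e P' /\
    #|[set B in P' | mixed A B]| < #|[set B in P | mixed A B]|.
Proof.
move=> Hdis Hcov Hcl P B1 B2 B3 [Ht Hc Hu] H1 H2 H3 n12 n13 n23 Hsame Hm.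
have disj : forall B C x, B \in P -> C \in P -> B != C -> x \in B -> x \in C -> False.
  move=> B C x HB HC nBC HxB HxC; by move: nBC; rewrite (Hu B C x HB HC HxB HxC) eqxx.
set S := B1 :|: B2 :|: B3.
have HdS : forall j, 3 %| #|S :&: A j|.
  move=> j; rewrite /S !setIUl !cardsU_disj.
  - have [-> ->] := Hsame j.
    by rewrite -addnA -[X in _ + (_ + X)]mul1n -mulSn -mulSn dvdn_mulr.
  - move=> x; rewrite !inE => /andP[a _] /andP[b _]; exact: disj H1 H2 n12 a b.
  - move=> x; rewrite !inE => /orP[] /andP[a _] /andP[b _].
      exact: disj H1 H3 n13 a b.
    exact: disj H2 H3 n23 a b.
have [Q [HQ1 HQ2 HQ3]] := tile Hdis Hcov Hcl (leqnn #|S|) HdS.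
set W := [set B1; B2; B3].
have inW : forall B, (B \in W) = [|| B == B1, B == B2 | B == B3].
  by move=> B; rewrite !inE orbA.
have SW : forall x, x \in S -> exists2 B, B \in W & x \in B.
  move=> x; rewrite !inE => /orP[/orP[]|] Hx.
  - by exists B1; rewrite ?inW ?eqxx.
  - by exists B2; rewrite ?inW ?eqxx ?orbT.
  - by exists B3; rewrite ?inW ?eqxx ?orbT.
have WP : forall B, B \in W -> B \in P.
  by move=> B; rewrite inW => /or3P[] /eqP ->.
exists ((P :\: W) :|: Q); split; first split.
- move=> B; rewrite !inE => /orP[/andP[_ HB]|HB]; first exact: Ht.
  by have [] := HQ1 B HB.
- move=> x; case HxS: (x \in S).
    have [X HX HxX] := HQ2 x HxS; by exists X; rewrite // inE HX orbT.
  have [B HB HxB] := Hc x; exists B => //.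
  rewrite inE in_setD HB andbT; apply/orP; left; apply/negP => HW.
  move: HxS; rewrite /S !inE; move: HW; rewrite inW => /or3P[] /eqP <-; by rewrite HxB ?orbT.
- have mixcase : forall B C x, B \in P :\: W -> C \in Q -> x \in B -> x \in C -> False.
    move=> B C x /setDP [HB HBW] HC HxB HxC.
    have [_ HCS _] := HQ1 C HC.
    have [D HD HxD] := SW x (subsetP HCS x HxC).
    by move: HBW; rewrite (Hu B D x HB (WP D HD) HxB HxD) HD.
  move=> B C x /setUP [HB|HB] /setUP [HC|HC] HxB HxC.
  + by move/setDP: HB => [HB _]; move/setDP: HC => [HC _]; exact: Hu HB HC HxB HxC.
  + by case: (mixcase B C x HB HC HxB HxC).
  + by case: (mixcase C B x HC HB HxC HxB).
  + exact: HQ3 HB HC HxB HxC.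
- have Hsub : [set B in (P :\: W) :|: Q | mixed A B] \subset [set B in P | mixed A B] :\ B1.
    apply/subsetP => B; rewrite inE => /andP[/setUP [/setDP [HB HBW]|HB] HmB].
    + rewrite !inE HB HmB andbT andbT; apply/negP => /eqP E; move: HBW; by rewrite E inW eqxx.
    + by have [_ _ h] := HQ1 B HB; rewrite HmB in h.
  apply: (leq_ltn_trans (subset_leq_card Hsub)).
  by rewrite [X in _ < X](cardsD1 B1) inE H1 Hm.
Qed.

Lemma count_lem (T : finType) (e : rel T) (A : 'I_3 -> {set T}) :
  (forall i j : 'I_3, i != j -> [disjoint A i & A j]) ->
  (forall x : T, exists i : 'I_3, x \in A i) ->
  forall P i, triangle_partition e P ->
  14 < #|[set v in A i | ~~ (pblock P v \subset A i)]| ->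
  exists p, 2 < #|[set B in P | mixed A B && (prof A B == p)]|.
Proof.
move=> Hdis Hcov P i HP Hbig.
have [/and3P[/eqP Hcover _ _] _] := HP.
have [Ht _ _] := (TPE e P).1 HP.
case: (boolP [exists p, 2 < #|[set B in P | mixed A B && (prof A B == p)]|]) => [/existsP //|Hno].
exfalso; move: Hbig; apply/negP; rewrite -leqNgt.
have HK : forall p, #|[set B in P | mixed A B && (prof A B == p)]| <= 2.
  move=> p; rewrite leqNgt; apply/negP => H; move/negP: Hno; apply; apply/existsP; exists p; exact: H.
have Hstep1 : [set v in A i | ~~ (pblock P v \subset A i)] \subset
              \bigcup_(B in P | mixed A B) (B :&: A i).
  apply/subsetP => v; rewrite inE => /andP[Hv Hns].
  have Hvc : v \in cover P by rewrite Hcover inE.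
  have Hmem := pblock_mem Hvc.
  have Hvb : v \in pblock P v by rewrite mem_pblock.
  apply/bigcupP; exists (pblock P v); last by rewrite inE Hvb Hv.
  rewrite Hmem /=; apply/forallP => j; rewrite ltnNge; apply/negP => Hj.
  have HB3 : #|pblock P v| = 3 by have [] := Ht _ Hmem.
  have Hsub : pblock P v \subset A j.
    by apply/setIidPl/eqP; rewrite eqEcard subsetIl HB3 Hj.
  have vj := subsetP Hsub v Hvb.
  case: (eqVneq j i) => [Eji|nji].
    by move: Hns; rewrite -Eji Hsub.
  by move: Hv; rewrite (@notin_other _ _ Hdis v j i vj) // eq_sym.
apply: (leq_trans (subset_leq_card Hstep1)).
apply: (leq_trans (card_bigcup_le _ _ _)).
rewrite (partition_big (prof A) predT) //=.
apply: (leq_trans _ (comp14 i)); apply: leq_sum => p _.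
case HR: (Rp p).
- rewrite (eq_bigr (fun _ => pc p i)); last first.
    move=> B /andP[/andP[HB _] /eqP <-]; rewrite pc_prof //.
    by have [h _] := Ht B HB; rewrite h.
  rewrite (eq_bigl (fun B => B \in [set B in P | mixed A B && (prof A B == p)])); last first.
    by move=> B; rewrite inE andbA.
  rewrite sum_nat_const; exact: leq_mul (HK p) (leqnn _).
- rewrite big1 // => B /andP[/andP[HB Hm] /eqP Hp]; exfalso; move: HR.
  by rewrite -Hp R_prof //; have [] := Ht B HB.
Qed.

Lemma step (T : finType) (e : rel T) (A : 'I_3 -> {set T}) :
  (forall i j : 'I_3, i != j -> [disjoint A i & A j]) ->
  (forall x : T, exists i : 'I_3, x \in A i) ->
  (forall i : 'I_3, is_clique e (A i)) ->
  forall P i, triangle_partition e P ->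
  14 < #|[set v in A i | ~~ (pblock P v \subset A i)]| ->
  exists P', triangle_partition e P' /\
    #|[set B in P' | mixed A B]| < #|[set B in P | mixed A B]|.
Proof.
move=> Hdis Hcov Hcl P i HP Hi.
have [p Hp] := count_lem Hdis Hcov HP Hi.
have HT := (TPE e P).1 HP; have [Ht _ _] := HT.
have [B1 [B2 [B3 [HB1 HB2 HB3 [n12 n13 n23]]]]] := three Hp.
move: HB1 HB2 HB3; rewrite !inE => /andP[HB1 /andP[Hm1 /eqP Hp1]]
  /andP[HB2 /andP[_ /eqP Hp2]] /andP[HB3 /andP[_ /eqP Hp3]].
have cnt : forall B, B \in P -> prof A B = p -> forall j, #|B :&: A j| = pc p j.
  move=> B HB <- j; rewrite pc_prof //; by have [h _] := Ht B HB; rewrite h.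
have same : forall j, #|B2 :&: A j| = #|B1 :&: A j| /\ #|B3 :&: A j| = #|B1 :&: A j|.
  by move=> j; rewrite !cnt.
have [P' [HP' Hlt]] := exch Hdis Hcov Hcl HT HB1 HB2 HB3 n12 n13 n23 same Hm1.
by exists P'; split => //; apply/TPE.
Qed.

Theorem mainTheorem13 (T : finType) (e : rel T) (A : 'I_3 -> {set T}) :
  simple_graph e ->
  (forall i j : 'I_3, i != j -> [disjoint A i & A j]) ->
  (forall x : T, exists i : 'I_3, x \in A i) ->
  (forall i : 'I_3, is_clique e (A i)) ->
  (exists P : {set {set T}}, triangle_partition e P) ->
  exists P : {set {set T}}, triangle_partition e P /\
    forall i : 'I_3,
      #|[set v in A i | ~~ (pblock P v \subset A i)]| <= 14.
Proof.
move=> _ Hdis Hcov Hcl [P0 HP0].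
suff H : forall n P, triangle_partition e P -> #|[set B in P | mixed A B]| <= n ->
  exists P : {set {set T}}, triangle_partition e P /\
    forall i : 'I_3, #|[set v in A i | ~~ (pblock P v \subset A i)]| <= 14.
  exact: H _ P0 HP0 (leqnn _).
elim=> [|n IH] P HP Hn;
  (case: (boolP [forall i, #|[set v in A i | ~~ (pblock P v \subset A i)]| <= 14]) =>
    [/forallP Hg|]; first by exists P);
  rewrite negb_forall => /existsP [i]; rewrite -ltnNge => Hi;
  have [P' [HP' Hlt]] := step Hdis Hcov Hcl HP Hi.
- by move: (leq_trans Hlt Hn).
- apply: (IH P' HP'); by rewrite -ltnS (leq_trans Hlt Hn).
Qed.
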